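(* Let $n\ge3$, $2\le t\le\lceil n/2\rceil$, and let $\mathsf{X}=\mathsf{C}_n(t;i,j)$ with $1\le i<j\le t$ and $j\ne i+1$. Then \[F_2(\mathsf{X})=\begin{cases}(t-1)(n-t+1) & \text{if } i=1 \text{ and } j=t,\\ (n-t+1)\big[(t-j+i)(j-i+1)-1\big] & \text{otherwise.}\end{cases}\]
   Context: $\mathsf{C}_n(t;i,j)$ ($i<j$) denotes the $n$-cycle with vertices $v_1,\dots,v_n$ in cyclic order (edges $v_kv_{k+1}$ and $v_nv_1$), with marked (ramified) vertices $v_1$ and $v_t$, together with one additional edge between $v_i$ and $v_j$. $F_2$ is the number of spanning forests consisting of two trees, one containing $v_1$ and the other containing $v_t$. *)

(* Defs.v *)
From mathcomp Require Import all_boot.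
Set Implicit Arguments. Unset Strict Implicit. Unset Printing Implicit Defensive.

(* Vertex v_k (1 <= k <= n) is the ordinal k-1 : 'I_n.
   Edges are indexed by 'I_n.+1 : edge e < n is the cycle edge v_{e+1} v_{e+2}
   (indices mod n, so edge n-1 is v_n v_1); edge n is the extra edge v_i v_j. *)
Definition Cend1 (n i j : nat) (e : 'I_n.+1) : nat :=
  if (e < n)%N then nat_of_ord e else i.-1.
Definition Cend2 (n i j : nat) (e : 'I_n.+1) : nat :=
  if (e < n)%N then (e.+1 %% n)%N else j.-1.

Definition Cadj (n i j : nat) (F : {set 'I_n.+1}) : rel 'I_n :=
  fun x y => [exists e in F,
     ((Cend1 i j e == x) && (Cend2 i j e == y))
  || ((Cend1 i j e == y) && (Cend2 i j e == x))].

Definition Cacyclic (n i j : nat) (F : {set 'I_n.+1}) : bool :=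
  [forall e in F, forall x : 'I_n, forall y : 'I_n,
     ((nat_of_ord x == Cend1 i j e) && (nat_of_ord y == Cend2 i j e))
       ==> ~~ connect (Cadj i j (F :\ e)) x y].

(* F is a spanning forest with two trees, one containing v_1 (= 0) and the
   other containing v_t (= t-1). *)
Definition two_forest (n t i j : nat) (F : {set 'I_n.+1}) : bool :=
  [&& Cacyclic i j F,
      [forall x : 'I_n, forall y : 'I_n,
         ((nat_of_ord x == 0) && (nat_of_ord y == t.-1))
           ==> ~~ connect (Cadj i j F) x y]
    & [forall z : 'I_n, exists x : 'I_n,
         ((nat_of_ord x == 0) || (nat_of_ord x == t.-1))
           && connect (Cadj i j F) x z]].

Definition F2 (n t i j : nat) : nat :=
  #|[set F : {set 'I_n.+1} | two_forest t i j F]|.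

(* Main.v *)
Require Import Defs.
From mathcomp Require Import all_boot zify.
Set Implicit Arguments. Unset Strict Implicit. Unset Printing Implicit Defensive.

Lemma Cadj_sym n i j (G : {set 'I_n.+1}) : symmetric (Cadj i j G).
Proof.
move=> x y; apply/existsP/existsP => -[e /andP[eG H]]; exists e;
  rewrite eG /=; by rewrite orbC.
Qed.

Lemma conn_sym n i j (G : {set 'I_n.+1}) x y :
  connect (Cadj i j G) x y = connect (Cadj i j G) y x.
Proof. exact: (sym_connect_sym (@Cadj_sym n i j G)). Qed.

Lemma closed_conn n i j (G : {set 'I_n.+1}) (S : pred nat) :
  (forall e, e \in G -> S (Cend1 i j e) = S (Cend2 i j e)) ->
  forall x y, connect (Cadj i j G) x y -> S x = S y.
Proof.
move=> HS x y.
have cl : closed (Cadj i j G) (fun v : 'I_n => S v).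
  move=> u v /existsP[e /andP[eG /orP[] /andP[/eqP h1 /eqP h2]]].
  - by rewrite !unfold_in /= -h1 -h2 HS.
  - by rewrite !unfold_in /= -h1 -h2 HS.
exact: (closed_connect cl).
Qed.

(* vertices 'I_n.+1, edges 'I_n.+2 *)
Lemma interval_closed n i j (G : {set 'I_n.+2}) lo hi :
  1 <= lo -> lo <= hi -> hi <= n ->
  (inord lo.-1 : 'I_n.+2) \notin G -> (inord hi : 'I_n.+2) \notin G ->
  (ord_max \in G -> (lo <= i.-1 <= hi) = (lo <= j.-1 <= hi)) ->
  forall x y, connect (Cadj i j G) x y -> (lo <= x <= hi) = (lo <= y <= hi).
Proof.
move=> h1 h2 h3 n1 n2 hc x y.
apply: (closed_conn (S := fun v => lo <= v <= hi)) => e eG.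
rewrite /Cend1 /Cend2.
case: ifP => he.
  have e1 : nat_of_ord e != lo.-1.
    apply/eqP=> E; move: n1; suff -> : (inord lo.-1 : 'I_n.+2) = e by rewrite eG.
    by apply/val_inj; rewrite /= inordK; lia.
  have e2 : nat_of_ord e != hi.
    apply/eqP=> E; move: n2; suff -> : (inord hi : 'I_n.+2) = e by rewrite eG.
    by apply/val_inj; rewrite /= inordK; lia.
  have [en|en] := ltnP e n.
    rewrite modn_small; last lia.
    apply/idP/idP; lia.
  have -> : e.+1 = n.+1 by lia.
  rewrite modnn; apply/idP/idP; lia.
have eM : e = ord_max by apply/val_inj => /=; have := ltn_ord e; lia.
by apply: hc; rewrite -eM.
Qed.

Lemma edge_adj n i j (G : {set 'I_n.+2}) k : k < n ->
  (inord k : 'I_n.+2) \in G -> Cadj i j G (inord k) (inord k.+1).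
Proof.
move=> kn kG; apply/existsP; exists (inord k); rewrite kG /=.
rewrite /Cend1 /Cend2 !inordK; try lia.
have hk : (k < n.+1) = true by apply/idP; lia.
by rewrite hk modn_small ?eqxx //; lia.
Qed.

Lemma wrap_adj n i j (G : {set 'I_n.+2}) :
  (inord n : 'I_n.+2) \in G -> Cadj i j G (inord n) (inord 0).
Proof.
move=> kG; apply/existsP; exists (inord n); rewrite kG /=.
rewrite /Cend1 /Cend2 !inordK; try lia.
by rewrite ltnSn modnn ?eqxx.
Qed.

Lemma chord_adj n i j (G : {set 'I_n.+2}) :
  ord_max \in G -> i.-1 <= n -> j.-1 <= n ->
  Cadj i j G (inord i.-1) (inord j.-1).
Proof.
move=> kG hi hj; apply/existsP; exists ord_max; rewrite kG /=.
rewrite /Cend1 /Cend2 !inordK; try lia.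
by rewrite /= ltnn /= !eqxx.
Qed.

Lemma path_conn n i j (G : {set 'I_n.+2}) p q : p <= q -> q <= n ->
  (forall k, p <= k < q -> (inord k : 'I_n.+2) \in G) ->
  connect (Cadj i j G) (inord p) (inord q).
Proof.
move=> pq; elim: q pq => [|q IH] pq qn H.
  by have -> : p = 0 by lia.
have [pq'|pq'] := leqP p q.
  apply: connect_trans (IH pq' (ltnW qn) _) _.
    by move=> k hk; apply: H; lia.
  apply: connect1; apply: edge_adj; first lia.
  by apply: H; lia.
by have -> : p = q.+1 by lia.
Qed.

Lemma path_conn2 n i j (G : {set 'I_n.+2}) u v : u <= n -> v <= n ->
  (forall k, minn u v <= k < maxn u v -> (inord k : 'I_n.+2) \in G) ->
  connect (Cadj i j G) (inord u) (inord v).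
Proof.
move=> un vn H; have [uv|uv] := leqP u v.
  apply: path_conn => // k hk; apply: H; lia.
rewrite conn_sym; apply: path_conn => //; first lia.
move=> k hk; apply: H; lia.
Qed.

Lemma Cend_le n i j (e : 'I_n.+2) : i.-1 <= n -> j.-1 <= n ->
  Cend1 i j e <= n /\ Cend2 i j e <= n.
Proof.
move=> hi hj; rewrite /Cend1 /Cend2; case: ifP => he; split => //; try lia.
Qed.

Lemma ord_eq_inord n (x : 'I_n.+1) k : k <= n -> (nat_of_ord x == k) -> x = inord k.
Proof. by move=> kn /eqP hx; apply/val_inj; rewrite /= inordK //; lia. Qed.

Definition acyc n i j (F : {set 'I_n.+2}) :=
  [forall e in F, ~~ connect (Cadj i j (F :\ e)) (inord (Cend1 i j e)) (inord (Cend2 i j e))].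
Definition sep n i j r (F : {set 'I_n.+2}) :=
  ~~ connect (Cadj i j F) (inord 0) (inord r).
Definition cov n i j r (F : {set 'I_n.+2}) :=
  [forall z, connect (Cadj i j F) (inord 0) z || connect (Cadj i j F) (inord r) z].

Lemma two_forest_E n t i j (F : {set 'I_n.+2}) : t.-1 <= n -> i.-1 <= n -> j.-1 <= n ->
  two_forest t i j F = [&& acyc i j F, sep i j t.-1 F & cov i j t.-1 F].
Proof.
move=> ht hi hj.
apply/and3P/and3P => -[A S C]; split.
- apply/forall_inP => e eF.
  have [h1 h2] := Cend_le e hi hj.
  move/forall_inP: A => /(_ e eF) /forallP /(_ (inord (Cend1 i j e))).
  move/forallP => /(_ (inord (Cend2 i j e))); rewrite !inordK ?eqxx //; lia.
- apply/negP => Hc; move/forallP: S => /(_ (inord 0)) /forallP /(_ (inord t.-1)).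
  by rewrite !inordK ?eqxx ?Hc //; lia.
- apply/forallP => z; move/forallP: C => /(_ z) /existsP[x /andP[/orP[] hx hc]].
  + by rewrite -(ord_eq_inord _ hx) ?hc //.
  + by rewrite -(ord_eq_inord ht hx) ?hc ?orbT.
- apply/forall_inP => e eF; apply/forallP => x; apply/forallP => y.
  have [h1 h2] := Cend_le e hi hj.
  apply/implyP => /andP[hx hy].
  rewrite (ord_eq_inord h1 hx) (ord_eq_inord h2 hy).
  by move/forall_inP: A => /(_ e eF).
- apply/forallP => x; apply/forallP => y; apply/implyP => /andP[hx hy].
  by rewrite (ord_eq_inord _ hx) // (ord_eq_inord ht hy).
- apply/forallP => z; move/forallP: C => /(_ z) /orP[] hc.
  + by apply/existsP; exists (inord 0); rewrite inordK ?hc.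
  + by apply/existsP; exists (inord t.-1); rewrite inordK ?hc ?eqxx ?orbT.
Qed.

Lemma no_island n i j r (G : {set 'I_n.+2}) lo hi :
  cov i j r G -> r <= n -> 1 <= lo -> lo <= hi -> hi <= n -> ~~ (lo <= r <= hi) ->
  (inord lo.-1 : 'I_n.+2) \notin G -> (inord hi : 'I_n.+2) \notin G ->
  (ord_max \in G -> (lo <= i.-1 <= hi) = (lo <= j.-1 <= hi)) -> False.
Proof.
move=> C rn h1 h2 h3 hr n1 n2 hc.
have IC := interval_closed h1 h2 h3 n1 n2 hc.
move/forallP: C => /(_ (inord lo)) /orP[] /IC; rewrite !inordK; lia.
Qed.

Lemma notex_in n (G : {set 'I_n.+2}) (P : nat -> bool) :
  ~~ [exists k : 'I_n.+2, P k && (k \notin G)] ->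
  forall k, k <= n.+1 -> P k -> (inord k : 'I_n.+2) \in G.
Proof.
move=> /existsPn H k kn Pk; have := H (inord k).
by rewrite inordK // Pk /= negbK.
Qed.

Lemma inord_val' n (e : 'I_n.+2) : inord (nat_of_ord e) = e.
Proof. exact: inord_val. Qed.

Lemma structure n i j r (G : {set 'I_n.+2}) :
  1 <= r -> r <= n -> i.-1 < j.-1 -> j.-1 <= r ->
  sep i j r G -> cov i j r G ->
  exists k x y : 'I_n.+2, [/\ r <= k <= n, x < r, ~: G = [set k; x; y] &
    (y == ord_max) || ((y < r) && (((i.-1 <= x < j.-1) && ~~ (i.-1 <= y < j.-1))
                                   || ((y == x) && ~~ (i.-1 <= x < j.-1))))].
Proof.
move=> r1 rn ab br S C.
have /existsP[k /andP[kr kG]] : [exists k : 'I_n.+2, (r <= k <= n) && (k \notin G)].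
  apply: contraT => H; exfalso.
  have P := @notex_in n G (fun k => r <= k <= n) H.
  move/negP: S; apply; rewrite conn_sym.
  apply: (connect_trans (y := inord n)).
    by apply: path_conn => // k' hk'; apply: P; lia.
  by apply: connect1; apply: wrap_adj; apply: P; lia.
have kuniq : forall k' : 'I_n.+2, r <= k' <= n -> k' \notin G -> k' = k.
  move=> k' hk' k'G; apply/val_inj/eqP; case: (ltngtP k k') => // h; exfalso.
  - apply: (no_island (lo := k.+1) (hi := k') C) => //; try lia;
      try (by rewrite /= inord_val'); move=> _; apply/idP/idP; lia.
  - apply: (no_island (lo := k'.+1) (hi := k) C) => //; try lia;
      try (by rewrite /= inord_val'); move=> _; apply/idP/idP; lia.
have /existsP[m /andP[mr mG]] : [exists m : 'I_n.+2, (m < r) && (m \notin G)].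
  apply: contraT => H; exfalso.
  have P := @notex_in n G (fun k => k < r) H.
  move/negP: S; apply.
  apply: path_conn; [lia|lia|move=> k' hk'; apply: P; lia].
have cross : forall m1 m2 : 'I_n.+2, m1 < m2 -> m2 < r -> m1 \notin G -> m2 \notin G ->
    (ord_max \in G) && ((i.-1 <= m1 < j.-1) != (i.-1 <= m2 < j.-1)).
  move=> m1 m2 h12 h2r g1 g2; apply/negP => Hn; apply: (no_island (lo := m1.+1) (hi := m2) C) => //; try lia;
    try (by rewrite /= inord_val'); move=> cG; move: Hn; rewrite cG /= negbK => /eqP; lia.
have onlyk : forall e : 'I_n.+2, r <= e -> e != ord_max -> (e \notin G) = (e == k).
  move=> e he hm; apply/idP/eqP => [eG|->//]; apply: kuniq => //.
  have := ltn_ord e; move: hm; rewrite -val_eqE /=; lia.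
have maxE : forall e : 'I_n.+2, (e == ord_max) = (nat_of_ord e == n.+1).
  by move=> e; rewrite -val_eqE.
case cG : (ord_max \in G); last first.
  exists k, m, ord_max; split => //; last by rewrite eqxx.
  apply/setP => e; rewrite !inE.
  case: (ltnP e r) => er.
    apply/idP/idP.
      move=> eG; case: (ltngtP e m) => h.
      - by have := cross e m h mr eG mG; rewrite cG.
      - by have := cross m e h er mG eG; rewrite cG.
      - by rewrite (val_inj h) eqxx orbT.
    rewrite -!val_eqE /= => /orP[/orP[]|] /eqP h; try lia.
    by rewrite (val_inj h).
  case: (eqVneq e ord_max) => [->|hm]; first by rewrite cG !orbT.
  rewrite onlyk //; apply/idP/idP => [->//|].
  rewrite -!val_eqE /= => /orP[/orP[]|] /eqP h //; try lia.
case: (boolP [exists m' : 'I_n.+2, (m' < r) && (m' != m) && (m' \notin G)]).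
  case/existsP => m' /andP[/andP[m'r m'm] m'G].
  have crs : forall m1 m2 : 'I_n.+2, m1 < r -> m2 < r -> m1 != m2 -> m1 \notin G -> m2 \notin G ->
      (i.-1 <= m1 < j.-1) != (i.-1 <= m2 < j.-1).
    move=> m1 m2 h1 h2 hne g1 g2; case: (ltngtP m1 m2) => h.
    - by have /andP[] := cross m1 m2 h h2 g1 g2.
    - by have /andP[_] := cross m2 m1 h h1 g2 g1; rewrite eq_sym.
    - by move: hne; rewrite (val_inj h) eqxx.
  have third : forall e : 'I_n.+2, e < r -> e \notin G -> (e == m) || (e == m').
    move=> e er eG; apply: contraT => /norP[em em'].
    have := crs _ _ er mr em eG mG; have := crs _ _ er m'r em' eG m'G.
    have := crs _ _ m'r mr m'm m'G mG.
    move: (i.-1 <= e < j.-1) (i.-1 <= m < j.-1) (i.-1 <= m' < j.-1).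
    by do 3 case.
  have mm' : m != m' by rewrite eq_sym.
  have hmm := crs _ _ mr m'r mm' mG m'G.
  have setE : ~: G = [set k; m; m'].
    apply/setP => e; rewrite !inE.
    case: (ltnP e r) => er.
      apply/idP/idP.
        move=> eG; have := third e er eG; case/orP => ->; by rewrite ?orbT.
      rewrite -!val_eqE /= => /orP[/orP[]|] /eqP h; try lia.
        by rewrite (val_inj h).
      by rewrite (val_inj h).
    case: (eqVneq e ord_max) => [->|hm]; first by rewrite cG -!val_eqE /=; lia.
    rewrite onlyk //; apply/idP/idP; first by move->.
    rewrite -!val_eqE /= => /orP[/orP[]|] /eqP h //; lia.
  case hx : (i.-1 <= m < j.-1).
    exists k, m, m'; split => //.
    by move: hmm; rewrite hx m'r; case: (i.-1 <= m' < j.-1); rewrite /= ?orbT.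
  exists k, m', m; split => //.
    by rewrite setE; apply/setP => e; rewrite !inE orbAC.
  by move: hmm; rewrite hx mr; case: (i.-1 <= m' < j.-1); rewrite /= ?orbT.
move=> H; have P := H.
exists k, m, m; split => //.
  apply/setP => e; rewrite !inE.
  case: (ltnP e r) => er.
    apply/idP/idP.
      move=> eG; have em : e == m.
        apply: contraT => em; rewrite -(negbTE H); apply/existsP; exists e.
        by rewrite er em eG.
      by rewrite em !orbT.
    rewrite -!val_eqE /= => /orP[/orP[]|] /eqP h; try lia; by rewrite (val_inj h).
  case: (eqVneq e ord_max) => [->|hm]; first by rewrite cG -!val_eqE /=; lia.
  rewrite onlyk //; apply/idP/idP => [->//|].
  rewrite -!val_eqE /= => /orP[/orP[]|] /eqP h //; lia.
rewrite mr eqxx /=; apply/orP; right.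
apply/negP => hab; move/negP: S; apply.
have inG : forall e : 'I_n.+2, e < r -> e != m -> e \in G.
  move=> e er em; apply: contraT => eG; rewrite -(negbTE H).
  by apply/existsP; exists e; rewrite er em eG.
have inG' : forall e, e < r -> e != nat_of_ord m -> (inord e : 'I_n.+2) \in G.
  move=> e er em; apply: inG; rewrite ?inordK //; try lia.
  by rewrite -val_eqE /= inordK //; lia.
apply: (connect_trans (y := inord i.-1)).
  by apply: path_conn; [lia|lia|move=> e he; apply: inG'; lia].
apply: (connect_trans (y := inord j.-1)).
  by apply: connect1; apply: chord_adj => //; lia.
by apply: path_conn; [lia|lia|move=> e he; apply: inG'; lia].
Qed.

Lemma inF n (k x y : 'I_n.+2) e : e <= n.+1 ->
  ((inord e : 'I_n.+2) \in ~: [set k; x; y]) =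
  [&& e != k, e != x & e != y].
Proof. by move=> en; rewrite !inE -!val_eqE /= inordK // !negb_or andbA. Qed.

Lemma maxF n (k x y : 'I_n.+2) :
  ((ord_max : 'I_n.+2) \in ~: [set k; x; y]) =
  [&& n.+1 != k, n.+1 != x & n.+1 != y].
Proof. by rewrite !inE -!val_eqE /= !negb_or andbA. Qed.

Ltac pc := apply: path_conn2; [lia|lia|move=> ? ?; rewrite inF; lia].

Lemma sepcov_D n i j r (k x y : 'I_n.+2) :
  1 <= r -> r <= n -> i.-1 < j.-1 -> j.-1 <= r -> r <= k <= n -> x < r ->
  (y == ord_max) || ((y < r) && (i.-1 <= x < j.-1) && ~~ (i.-1 <= y < j.-1)) ->
  sep i j r (~: [set k; x; y]) /\ cov i j r (~: [set k; x; y]).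
Proof.
move=> r1 rn ab br kr xr hy.
set F := ~: [set k; x; y].
have lt := ltn_ord y.
case/orP: hy => [/eqP yM | /andP[/andP[yr xab] yab]].
  have yv : nat_of_ord y = n.+1 by rewrite yM.
  have cF : ord_max \notin F by rewrite /F maxF yv eqxx !andbF.
  split.
    apply/negP => Hc.
    have h1 : (inord (x.+1).-1 : 'I_n.+2) \notin F by rewrite inF; lia.
    have h2 : (inord k : 'I_n.+2) \notin F by rewrite inF; lia.
    have h3 : ord_max \in F -> (x.+1 <= i.-1 <= k) = (x.+1 <= j.-1 <= k) by rewrite (negbTE cF).
    have := interval_closed (ltn0Sn x) (_ : x.+1 <= k) (_ : k <= n) h1 h2 h3 Hc.
    rewrite !inordK; lia.
  apply/forallP => z; rewrite -(inord_val z).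
  have zn := ltn_ord z.
  case: (leqP z x) => zx; first by apply/orP; left; pc.
  case: (leqP z k) => zk.
    apply/orP; right; pc.
  apply/orP; left; rewrite conn_sym.
  apply: (connect_trans (y := inord n)); first pc.
  by apply: connect1; apply: wrap_adj; rewrite inF; lia.
have yv : nat_of_ord y < r by [].
have cF : ord_max \in F by rewrite /F maxF; lia.
split.
  apply/negP => Hc.
  have h1 : (inord (y.+1).-1 : 'I_n.+2) \notin F by rewrite inF; lia.
  have h2 : (inord k : 'I_n.+2) \notin F by rewrite inF; lia.
  have h3 : ord_max \in F -> (y.+1 <= i.-1 <= k) = (y.+1 <= j.-1 <= k) by move=> _; lia.
  have := interval_closed (ltn0Sn y) (_ : y.+1 <= k) (_ : k <= n) h1 h2 h3 Hc.
  rewrite !inordK; lia.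
apply/forallP => z; rewrite -(inord_val z).
have zn := ltn_ord z.
case: (leqP z (minn x y)) => zx; first by apply/orP; left; pc.
case: (leqP z k) => zk; last first.
  apply/orP; left; rewrite conn_sym.
  apply: (connect_trans (y := inord n)); first pc.
  by apply: connect1; apply: wrap_adj; rewrite inF; lia.
case: (ltnP (maxn x y) z) => zM.
  by apply/orP; right; pc.
case: (ltnP y x) => yx.
  apply/orP; right; rewrite conn_sym.
  apply: (connect_trans (y := inord i.-1)); first pc.
  apply: (connect_trans (y := inord j.-1)).
    by apply: connect1; apply: chord_adj => //; lia.
  pc.
apply/orP; left.
apply: (connect_trans (y := inord i.-1)); first pc.
apply: (connect_trans (y := inord j.-1)).
  by apply: connect1; apply: chord_adj => //; lia.
pc.
Qed.

Lemma conn_mono n i j (G H : {set 'I_n.+2}) u v : G \subset H ->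
  connect (Cadj i j G) u v -> connect (Cadj i j H) u v.
Proof.
move=> GH; apply: connect_sub => u' v' /existsP[e /andP[eG he]].
by apply: connect1; apply/existsP; exists e; rewrite (subsetP GH _ eG).
Qed.

Lemma conn_del n i j (F : {set 'I_n.+2}) e u v : i.-1 <= n -> j.-1 <= n ->
  connect (Cadj i j (F :\ e)) (inord (Cend1 i j e)) (inord (Cend2 i j e)) ->
  connect (Cadj i j F) u v -> connect (Cadj i j (F :\ e)) u v.
Proof.
move=> hi hj Hc; apply: connect_sub => u' v' /existsP[e' /andP[e'F he']].
have [h1 h2] := Cend_le e hi hj.
case: (eqVneq e' e) => [E|ne].
  move: he'; rewrite E => /orP[] /andP[hu hv].
  - have -> : u' = inord (Cend1 i j e) by apply: ord_eq_inord; rewrite // eq_sym.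
    have -> : v' = inord (Cend2 i j e) by apply: ord_eq_inord; rewrite // eq_sym.
    exact: Hc.
  - have -> : v' = inord (Cend1 i j e) by apply: ord_eq_inord; rewrite // eq_sym.
    have -> : u' = inord (Cend2 i j e) by apply: ord_eq_inord; rewrite // eq_sym.
    by rewrite conn_sym.
by apply: connect1; apply/existsP; exists e'; rewrite !inE ne e'F.
Qed.

Definition Dc n i j r (p : 'I_n.+2 * ('I_n.+2 * 'I_n.+2)) :=
  let: (k, (x, y)) := p in
  [&& r <= k <= n, x < r &
     (y == ord_max) || ((y < r) && (i.-1 <= x < j.-1) && ~~ (i.-1 <= y < j.-1))].

Definition fD n (p : 'I_n.+2 * ('I_n.+2 * 'I_n.+2)) : {set 'I_n.+2} :=
  let: (k, (x, y)) := p in ~: [set k; x; y].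

Lemma card3 (T : finType) (a b c : T) : #|[set a; b; c]| <= 3.
Proof.
rewrite -setUA cardsU1 cardsU1 cards1.
by case: (a \notin _); case: (b \notin _).
Qed.

Lemma charF n t i j (F : {set 'I_n.+2}) :
  2 <= t -> t.-1 <= n -> 1 <= i -> i < j -> j <= t ->
  two_forest t i j F = (F \in [set fD p | p in [set p | Dc i j t.-1 p]]).
Proof.
move=> t2 tn i1 ij jt.
set r := t.-1.
have r1 : 1 <= r by rewrite /r; lia.
have ab : i.-1 < j.-1 by lia.
have br : j.-1 <= r by rewrite /r; lia.
have hi : i.-1 <= n by lia.
have hj : j.-1 <= n by lia.
rewrite two_forest_E //.
apply/and3P/imsetP.
  case=> A S C.
  have [k [x [y [kr xr G hy]]]] := structure r1 tn ab br S C.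
  rewrite -[F]setCK G.
  exists (k, (x, y)) => //.
  rewrite inE /= kr xr /=.
  case/orP: hy => [-> //|/andP[yr /orP[/andP[h1 h2]|/andP[/eqP yx xab]]]].
    by rewrite yr h1 h2 orbT.
  exfalso.
  have cF : ord_max \in F.
    rewrite -[F]setCK G maxF; have := ltn_ord k; lia.
  move/forall_inP: A => /(_ _ cF); apply/negP; apply/negPn.
  rewrite /Cend1 /Cend2 /= ltnn.
  apply: path_conn; [lia|lia|move=> e he].
  rewrite !inE -[F]setCK G inF; last lia.
  rewrite yx -val_eqE /= inordK; lia.
case=> [[k [x y]]]; rewrite inE /= => /and3P[kr xr hy] ->.
have [S C] := sepcov_D r1 tn ab br kr xr hy.
split => //.
apply/forall_inP => e eF; apply/negP => Hc.
have S' : sep i j r (~: [set k; x; y] :\ e).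
  apply/negP => H; move/negP: S; apply; apply: conn_mono H; exact: subD1set.
have C' : cov i j r (~: [set k; x; y] :\ e).
  apply/forallP => z; move/forallP: C => /(_ z) /orP[] H; apply/orP;
  [left|right]; exact: conn_del Hc H.
have [k' [x' [y' [_ _ G' _]]]] := structure r1 tn ab br S' C'.
have := card3 k' x' y'; rewrite -G'.
have -> : ~: (~: [set k; x; y] :\ e) = e |: [set k; x; y].
  by apply/setP => u; rewrite !inE negb_and !negbK orbC.
move: eF; rewrite !inE !negb_or => /andP[/andP[ek ex] ey].
rewrite -!setUA cardsU1 cardsU1 cardsU1 cards1 !inE !negb_or ek ex ey /=.
have -> : k != x by rewrite -val_eqE /=; lia.
have -> : x != y.
  rewrite -val_eqE /=; case/orP: hy => [/eqP -> /=|]; first by have := ltn_ord x; lia.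
  lia.
have -> : k != y.
  rewrite -val_eqE /=; case/orP: hy => [/eqP -> /=|]; first by lia.
  lia.
by [].
Qed.

Lemma fD_inj n i j r : 1 <= r -> r <= n ->
  {in [set p | Dc i j r p] &, injective (@fD n)}.
Proof.
move=> r1 rn [k [x y]] [k' [x' y']]; rewrite !inE /= => /and3P[kr xr hy] /and3P[kr' xr' hy'].
move/setC_inj => E.
have mem : forall u : 'I_n.+2, (u \in [set k; x; y]) = (u \in [set k'; x'; y']) by rewrite E.
have hy1 := ltn_ord y; have hy2 := ltn_ord y'.
have m1 := mem k; have m2 := mem x; have m3 := mem y.
have m4 := mem k'; have m5 := mem x'; have m6 := mem y'.
rewrite !inE !eqxx ?orbT /= -!val_eqE /= in m1 m2 m3 m4 m5 m6.
move: hy hy'; rewrite -!val_eqE /= => hy hy'.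
have ek : nat_of_ord k = k'.
  clear m2 m3 m4 m5 m6 E mem; move: m1 => /esym; lia.
have ey : nat_of_ord y = y'.
  case/orP: hy => [/eqP yv|/andP[/andP[yr xab] yab]].
    clear m1 m2 m4 m5 m6 E mem hy'; move: m3 => /esym; lia.
  case/orP: hy' => [/eqP yv|/andP[/andP[yr' xab'] yab']].
    clear m1 m2 m4 m3 m5 E mem; move: m6; lia.
  clear m1 m2 m4 m5 m6 E mem; move: m3 => /esym; lia.
have ex : nat_of_ord x = x'.
  case/orP: hy => [/eqP yv|/andP[/andP[yr xab] yab]].
    clear m1 m3 m4 m5 m6 E mem hy'; move: m2 => /esym; lia.
  case/orP: hy' => [/eqP yv|/andP[/andP[yr' xab'] yab']]; first lia.
  clear m1 m3 m4 m5 m6 E mem; move: m2 => /esym; lia.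
by rewrite (val_inj ek) (val_inj ex) (val_inj ey).
Qed.

Lemma card_int m lo hi : hi <= m ->
  #|[set e : 'I_m | lo <= e < hi]| = hi - lo.
Proof.
elim: hi => [|h IH] hm.
  by rewrite (_ : [set e : 'I_m | _] = set0) ?cards0 //; apply/setP => e; rewrite !inE; lia.
case: (leqP lo h) => lh.
  have -> : [set e : 'I_m | lo <= e < h.+1] = Ordinal hm |: [set e : 'I_m | lo <= e < h].
    apply/setP => e; rewrite !inE -val_eqE /=; lia.
  rewrite cardsU1 IH; last lia.
  rewrite inE /= ltnn andbF /=; lia.
rewrite (_ : [set e : 'I_m | _] = set0) ?cards0; first lia.
apply/setP => e; rewrite !inE; lia.
Qed.

Lemma card_D n i j r : 1 <= r -> r <= n -> i.-1 < j.-1 -> j.-1 <= r ->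
  #|[set p | @Dc n i j r p]| =
  (n.+1 - r) * (r + (j.-1 - i.-1) * (r - (j.-1 - i.-1))).
Proof.
move=> r1 rn ab br.
set K := [set k : 'I_n.+2 | r <= k < n.+1].
set X1 := [set x : 'I_n.+2 | 0 <= x < r].
set X2 := [set x : 'I_n.+2 | i.-1 <= x < j.-1].
set Y2 := [set y : 'I_n.+2 | 0 <= y < i.-1] :|: [set y : 'I_n.+2 | j.-1 <= y < r].
have -> : [set p | @Dc n i j r p] = setX K (setX X1 [set ord_max] :|: setX X2 Y2).
  apply/setP => -[k [x y]]; rewrite !inE /= -!val_eqE /=.
  have := ltn_ord y; lia.
rewrite cardsX cardsU.
have -> : setX X1 [set ord_max] :&: setX X2 Y2 = set0.
  apply/setP => -[x y]; rewrite !inE /= -!val_eqE /=; lia.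
rewrite cards0 subn0 !cardsX cards1 !card_int; try lia.
rewrite cardsU.
have -> : [set y : 'I_n.+2 | 0 <= y < i.-1] :&: [set y : 'I_n.+2 | j.-1 <= y < r] = set0.
  apply/setP => y; rewrite !inE; lia.
rewrite cards0 subn0 !card_int; try lia.
have -> : i.-1 - 0 + (r - j.-1) = r - (j.-1 - i.-1) by lia.
lia.
Qed.

Theorem proposition7p6 (n t i j : nat) :
  (3 <= n)%N -> (2 <= t)%N -> (t <= uphalf n)%N ->
  (1 <= i)%N -> (i < j)%N -> (j <= t)%N -> j != i.+1 ->
  F2 n t i j =
    (if (i == 1) && (j == t) then (t - 1) * (n - t + 1)
     else (n - t + 1) * ((t - j + i) * (j - i + 1) - 1))%N.
Proof.
move=> n3 t2 th i1 ij jt _.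
case: n n3 th => [|n] // n3 th.
have tn : t.-1 <= n by lia.
rewrite /F2.
have E : [set F : {set 'I_n.+2} | two_forest t i j F] =
         [set fD p | p in [set p | @Dc n i j t.-1 p]].
  by apply/setP => F; rewrite inE charF.
rewrite E card_in_imset; last by apply: fD_inj; lia.
rewrite card_D; try lia.
set r := t.-1; set d := j.-1 - i.-1.
have ht : t = r.+1 by rewrite /r; lia.
have hd : j - i = d by rewrite /d; lia.
have [s hs] : exists s, r = d + s by exists (r - d); rewrite /d /r; lia.
have e1 : n.+1 - t + 1 = n.+1 - r by lia.
have e2 : t - j + i = s.+1 by lia.
have e3 : j - i + 1 = d.+1 by lia.
have e4 : r - d = s by lia.
rewrite e1 e2 e3 e4 hs.
have e5 : s.+1 * d.+1 - 1 = d + s + d * s.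
  rewrite mulSn mulnS; lia.
case: ifP => [/andP[/eqP hi /eqP hj]|_]; last by rewrite e5.
have s0 : s = 0 by lia.
have e6 : t - 1 = d + s by lia.
by rewrite e6 s0 muln0 !addn0 mulnC.
Qed.
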